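(* Let $p$ be a prime, $d\ge1$, and $w:\mathbb{Z}_p^d\to[0,\infty)$, not identically zero, with $\operatorname{supp}(w)=E$. If some $B\subseteq\mathbb{Z}_p^d$ is a spectrum for $L^2(w)$, then $w=c\,1_E$ for some constant $c>0$.
   Context: $\mathbb{Z}_p^d$ is the $d$-dimensional vector space over the field $\mathbb{Z}_p$, $x\cdot b=\sum_i x_ib_i$, $\chi(t)=e^{2\pi i t/p}$. $1_E$ is the indicator of $E$. For $w:\mathbb{Z}_p^d\to[0,\infty)$, $\operatorname{supp}(w)=\{x:w(x)>0\}$ and $L^2(w)$ is the space of functions on $\operatorname{supp}(w)$ with inner product $\langle f,h\rangle_w=\sum_{x}f(x)\overline{h(x)}w(x)$. A set $B\subseteq\mathbb{Z}_p^d$ is a spectrum for $L^2(w)$ if the functions $\chi_b(x)=\chi(x\cdot b)$, $b\in B$, form an orthogonal basis of $L^2(w)$: $\sum_x\chi(x\cdot(b-b'))w(x)=0$ for all distinct $b,b'\in B$, and every function on $\operatorname{supp}(w)$ is a linear combination of the $\chi_b$ restricted to $\operatorname{supp}(w)$. *)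

(* Defs.v *)
From HB Require Import structures.
From mathcomp Require Import all_boot all_order all_algebra all_field.
Set Implicit Arguments. Unset Strict Implicit. Unset Printing Implicit Defensive.
Import Order.TTheory GRing.Theory Num.Theory.
Local Open Scope ring_scope.

Definition dotp (p d : nat) (x b : 'rV['F_p]_d) : 'F_p :=
  \sum_(i < d) x ord0 i * b ord0 i.

(* chi(t) = zeta^t, where zeta is a primitive p-th root of unity in C
   (for C = complex numbers and zeta = e^{2 pi i/p} this is e^{2 pi i t/p}). *)
Definition chi (C : numClosedFieldType) (p : nat) (zeta : C) (t : 'F_p) : C :=
  zeta ^+ (t : nat).

Definition supp (C : numClosedFieldType) (p d : nat) (w : 'rV['F_p]_d -> C)
  : {set 'rV['F_p]_d} := [set x | 0 < w x].

(* B is a spectrum for L^2(w): the characters chi_b (b in B) are pairwise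
   orthogonal in L^2(w) and span all functions on supp(w). *)
Definition is_spectrum (C : numClosedFieldType) (p d : nat) (zeta : C)
  (w : 'rV['F_p]_d -> C) (B : {set 'rV['F_p]_d}) : Prop :=
  (forall b b', b \in B -> b' \in B -> b != b' ->
     \sum_(x : 'rV['F_p]_d) chi zeta (dotp x (b - b')) * w x = 0)
  /\
  (forall f : 'rV['F_p]_d -> C, exists a : 'rV['F_p]_d -> C,
     forall x, x \in supp w -> f x = \sum_(b in B) a b * chi zeta (dotp x b)).

(* Main.v *)
Require Import Defs.
From HB Require Import structures.
From mathcomp Require Import all_boot all_order all_algebra all_field.
Import Order.TTheory GRing.Theory Num.Theory.
Local Open Scope ring_scope.

Section Aux.
Variables (C : numClosedFieldType) (p : nat) (zeta : C).
Hypotheses (hp : prime p) (hzeta : p.-primitive_root zeta).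

Lemma norm_zeta : `|zeta| = 1.
Proof.
have h1 := prim_expr_order hzeta.
apply/eqP; rewrite -(pexpr_eq1 (n:=p)) ?prime_gt0 //.
by rewrite -normrX h1 normr1.
Qed.

Lemma zeta_neq0 : zeta != 0.
Proof. by rewrite -normr_eq0 norm_zeta oner_eq0. Qed.

Lemma chiD (a b : 'F_p) : chi zeta (a + b) = chi zeta a * chi zeta b.
Proof.
rewrite /chi -exprD -(prim_expr_mod hzeta (a + b)%N).
congr (_ ^+ _).
exact: (f_equal (fun n => ((a : nat) + b) %% n)%N (Fp_cast hp)).
Qed.

Lemma chi_neq0 (a : 'F_p) : chi zeta a != 0.
Proof. by rewrite /chi expf_neq0 // zeta_neq0. Qed.

Lemma chiB (a b : 'F_p) : chi zeta (a - b) = chi zeta a / chi zeta b.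
Proof.
apply: (mulIf (chi_neq0 b)).
by rewrite -chiD subrK mulfVK // chi_neq0.
Qed.

Lemma chi_conj (a : 'F_p) : (chi zeta a)^* = (chi zeta a)^-1.
Proof.
by rewrite invC_norm /chi normrX norm_zeta !expr1n invr1 mul1r.
Qed.

Lemma chi0 : chi zeta (0 : 'F_p) = 1.
Proof. by rewrite /chi expr0. Qed.

Lemma dotpB d (x b b' : 'rV['F_p]_d) : dotp x (b - b') = dotp x b - dotp x b'.
Proof.
rewrite /dotp -sumrB; apply: eq_bigr => i _.
by rewrite !mxE mulrBr.
Qed.

Lemma key d (x b b' : 'rV['F_p]_d) :
  chi zeta (dotp x b) * (chi zeta (dotp x b'))^* = chi zeta (dotp x (b - b')).
Proof. by rewrite chi_conj dotpB chiB. Qed.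

End Aux.

Theorem lemma4p2 (C : numClosedFieldType) (p d : nat) (zeta : C)
  (hp : prime p) (hd : (1 <= d)%N) (hzeta : p.-primitive_root zeta)
  (w : 'rV['F_p]_d -> C) (E : {set 'rV['F_p]_d})
  (hw : forall x, 0 <= w x) (hw0 : exists x, w x != 0) (hE : E = supp w) :
  (exists B : {set 'rV['F_p]_d}, is_spectrum zeta w B) ->
  exists c : C, 0 < c /\ forall x, w x = c * (x \in E)%:R.
Proof.
case=> B [horth hspan].
set s := \sum_(x : 'rV['F_p]_d) w x.
have wpos : forall x, w x != 0 -> 0 < w x by move=> x hx; rewrite lt_def hx hw.
have w0 : forall x, ~~ (0 < w x) -> w x = 0.
  by move=> x hx; apply/eqP; apply: contraNT hx => /wpos.
have [x0 hx0] := hw0.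
have spos : 0 < s.
  rewrite /s (bigD1 x0) //=; apply: ltr_pwDl; first exact: wpos.
  by apply: sumr_ge0 => x _; apply: hw.
have main : forall y, 0 < w y -> w y * #|B|%:R = s.
  move=> y hy.
  have [a ha] := hspan (fun x => (x == y)%:R).
  have ya : y \in supp w by rewrite inE.
  have coef : forall b', b' \in B ->
      a b' * s = w y * (chi zeta (dotp y b'))^*.
    move=> b' hb'.
    transitivity (\sum_(x : 'rV['F_p]_d)
        (x == y)%:R * (chi zeta (dotp x b'))^* * w x); last first.
      rewrite (bigD1 y) /=; last by [].
      rewrite eqxx mul1r big1 ?addr0; first by rewrite mulrC.
      by move=> x /negbTE ->; rewrite !mul0r.
    transitivity (\sum_(x : 'rV['F_p]_d)
        (\sum_(b in B) a b * chi zeta (dotp x b)) * (chi zeta (dotp x b'))^* * w x); last first.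
apply: eq_bigr => x _.
      have [hx|hx] := boolP (0 < w x).
        by rewrite -ha // inE.
      by rewrite w0 // !mulr0.
    transitivity (\sum_(b in B) a b * \sum_(x : 'rV['F_p]_d)
        chi zeta (dotp x (b - b')) * w x); last first.
rewrite (eq_bigr (fun b => \sum_(x : 'rV['F_p]_d) a b * (chi zeta (dotp x (b - b')) * w x))); last by move=> b _; rewrite mulr_sumr.
      rewrite exchange_big /=; apply: eq_bigr => x _.
      rewrite !mulr_suml; apply: eq_bigr => b _.
      by rewrite -(@key C p zeta hp hzeta) !mulrA.
rewrite (bigD1 b') /=; last by [].
    rewrite [X in _ + X]big1 ?addr0.
      congr (_ * _); apply: eq_bigr => x _.
      by rewrite subrr /dotp big1 ?chi0 ?mul1r // => i _; rewrite mxE mulr0.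
    by move=> b /andP [hb hbb]; rewrite horth ?mulr0.
have := ha y ya; rewrite eqxx => /(congr1 (fun t => t * s)).
  rewrite mul1r mulr_suml => ->.
  rewrite -sum1_card natr_sum mulr_sumr; apply: eq_bigr => b hb.
  rewrite mulrAC coef // -mulrA [_^* * _]mulrC (@key C p zeta hp hzeta) subrr.
  have -> : dotp y (0 : 'rV['F_p]_d) = 0.
    by rewrite /dotp big1 // => i _; rewrite mxE mulr0.
  by rewrite chi0.
have Bpos : (0 < #|B|)%N.
  rewrite lt0n; apply/negP => /eqP hB.
  by move: (main _ (wpos _ hx0)); rewrite hB mulr0 => hs; rewrite -hs ltxx in spos.
exists (s / #|B|%:R); split.
  by rewrite divr_gt0 // ltr0n.
move=> x; rewrite hE inE.
have [hx|hx] := boolP (0 < w x).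
  by rewrite mulr1 -(main _ hx) mulfK // pnatr_eq0 -lt0n.
by rewrite mulr0 w0.
Qed.
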